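(* Let $K$ be a field with a non-trivial non-Archimedean valuation $|\cdot|$, let $X$ be a complete non-Archimedean normed space over $K$, and let $G$ be an additive (abelian) group. Fix $k\in\mathbb N$, and assume $|2k^3|\neq 0$. For $f:G\to X$ define $$Df(x,y)=f(kx+y)+f(kx-y)-k[f(x+y)+f(x-y)]-2(k^3-k)f(x)\qquad (x,y\in G).$$ Let $\varphi:G\times G\to[0,\infty)$ be a function such that $$\lim_{n\to\infty}\frac{\varphi(k^nx,k^ny)}{|k|^{3n}}=0\quad\text{for all }x,y\in G,$$ and such that for each $x\in G$ the limit $$\tilde\varphi(x):=\lim_{n\to\infty}\max\Big\{\frac{\varphi(k^jx,0)}{|k|^{3j}}:\ 0\le j<n\Big\}$$ exists. Suppose $f:G\to X$ satisfies $\|Df(x,y)\|\le\varphi(x,y)$ for all $x,y\in G$. Then there exists a cubic mapping $C:G\to X$ (i.e. $DC(x,y)=0$ for all $x,y\in G$) such that $$\|C(x)-f(x)\|\le\frac{1}{|2k^3|}\tilde\varphi(x)\quad\text{for all }x\in G.$$ Moreover, if $$\lim_{i\to\infty}\lim_{n\to\infty}\max\Big\{\frac{\varphi(k^jx,0)}{|k|^{3j}}:\ i\le j<n+i\Big\}=0\quad\text{for all }x\in G,$$ then $C$ is the unique cubic mapping satisfying this inequality.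
   Context: A non-Archimedean field is a field $K$ with a function $|\cdot|:K\to[0,\infty)$ such that $|r|=0$ iff $r=0$, $|rs|=|r||s|$, and $|r+s|\le\max\{|r|,|s|\}$. A non-Archimedean norm on a $K$-vector space $X$ is a function $\|\cdot\|:X\to\mathbb R$ with $\|x\|=0$ iff $x=0$, $\|rx\|=|r|\|x\|$, and $\|x+y\|\le\max\{\|x\|,\|y\|\}$; complete means every Cauchy sequence converges. Integers are regarded as elements of $K$, and $|k|$ denotes the valuation of $k$ in $K$. *)

(* Defs.v *)
From HB Require Import structures.
From mathcomp Require Import all_boot all_order all_algebra.
From mathcomp Require Import all_classical all_reals all_analysis.
From mathcomp Require Import Rstruct Rstruct_topology.
From Stdlib Require Rdefinitions.
Notation R := Rdefinitions.R.
Set Implicit Arguments. Unset Strict Implicit. Unset Printing Implicit Defensive.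
Import Order.TTheory GRing.Theory Num.Theory.
Local Open Scope ring_scope.

Definition nonarch_abs (K : fieldType) (a : K -> R) : Prop :=
  [/\ (forall r, 0 <= a r),
      (forall r, a r = 0 <-> r = 0),
      (forall r s, a (r * s) = a r * a s) &
      (forall r s, a (r + s) <= Num.max (a r) (a s))].

Definition nontrivial_abs (K : fieldType) (a : K -> R) : Prop :=
  exists r : K, a r != 0 /\ a r != 1.

Definition nonarch_norm (K : fieldType) (a : K -> R) (X : lmodType K)
  (nrm : X -> R) : Prop :=
  [/\ (forall x, nrm x = 0 <-> x = 0),
      (forall (r : K) x, nrm (r *: x) = a r * nrm x) &
      (forall x y, nrm (x + y) <= Num.max (nrm x) (nrm y))].

Definition complete_norm (K : fieldType) (X : lmodType K) (nrm : X -> R) : Prop :=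
  forall u : nat -> X,
    (forall e : R, 0 < e -> exists N : nat, forall m n : nat, (N <= m)%N -> (N <= n)%N ->
        nrm (u m - u n) < e) ->
    exists l : X, forall e : R, 0 < e -> exists N : nat, forall n : nat, (N <= n)%N ->
        nrm (u n - l) < e.

Definition Dop (G : zmodType) (K : fieldType) (X : lmodType K) (k : nat)
  (f : G -> X) (x y : G) : X :=
  f (x *+ k + y) + f (x *+ k - y) - (f (x + y) + f (x - y)) *+ k
  - f x *+ (2 * (k ^ 3 - k)).

Definition cubic (G : zmodType) (K : fieldType) (X : lmodType K) (k : nat)
  (f : G -> X) : Prop := forall x y, Dop k f x y = 0.

(** max { phi(k^j x, 0) / |k|^(3j) : i <= j < n + i }  (0 for an empty range;
    all terms are nonnegative). *)
Definition maxterm (G : zmodType) (k : nat) (ak : R) (phi : G -> G -> R)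
  (x : G) (i n : nat) : R :=
  \big[Num.max/0]_(i <= j < n + i) (phi (x *+ (k ^ j)) 0 / ak ^+ (3 * j)).

(* Main.v *)
Require Import Defs.
From HB Require Import structures.
From mathcomp Require Import all_boot all_order all_algebra.
From mathcomp Require Import all_classical all_reals all_analysis.
From mathcomp Require Import Rstruct Rstruct_topology.
From Stdlib Require Rdefinitions.
Local Notation R := Rdefinitions.R.
Import Order.TTheory GRing.Theory Num.Theory.
Local Open Scope classical_set_scope.
Local Open Scope ring_scope.
From mathcomp Require Import ring lra zify.
Import numFieldNormedType.Exports.
Lemma cvg_eps {u : nat -> R} {l : R} : u @ \oo --> l -> forall e : R, 0 < e -> exists N, forall n, (N <= n)%N -> `|u n - l| < e.
Proof. move=> H e he. have [N _ HN] := proj1 (@cvgrPdist_lt R R^o _ _ _ u l) H e he. exists N => n hn. rewrite distrC. exact: HN. Qed.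
Lemma le_eps (a b : R) : (forall e : R, 0 < e -> a <= b + e) -> a <= b.
Proof. move=> H. rewrite leNgt; apply/negP => hab. have := H ((a - b)/2).
have h: 0 < (a-b)/2 by rewrite divr_gt0 // subr_gt0. move=> /(_ h). lra. Qed.
Section A.
Lemma abs_ge0 {K : fieldType} {a : K -> R} : nonarch_abs a -> forall x, 0 <= a x.
Proof. by case. Qed.
Lemma abs0 {K : fieldType} {a : K -> R} : nonarch_abs a -> a 0 = 0.
Proof. by case=> _ h _ _; apply/h. Qed.
Lemma abs1 {K : fieldType} {a : K -> R} : nonarch_abs a -> a 1 = 1.
Proof. case=> _ h hm _. have := hm 1 1. rewrite mulr1 => e.
have n0 : a 1 != 0 by apply/eqP => /h /eqP; rewrite oner_eq0.
by apply: (mulfI n0); rewrite -e mulr1. Qed.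
Lemma absM {K : fieldType} {a : K -> R} : nonarch_abs a -> forall x y, a (x * y) = a x * a y.
Proof. by case. Qed.
Lemma absN1 {K : fieldType} {a : K -> R} : nonarch_abs a -> a (-1) = 1.
Proof. move=> ha. have := absM ha (-1) (-1). rewrite mulrNN mulr1 abs1 // => e.
have g := abs_ge0 ha (-1).
have : (a (-1) - 1) * (a (-1) + 1) = 0 by rewrite -subr_sqr expr2 -e expr1n subrr.
move/eqP; rewrite mulf_eq0 => /orP [|]; rewrite ?subr_eq0 ?addr_eq0 => /eqP; lra. Qed.
Lemma absX {K : fieldType} {a : K -> R} : nonarch_abs a -> forall x n, a (x ^+ n) = a x ^+ n.
Proof. move=> ha x; elim=> [|n ih]; first by rewrite !expr0 abs1.
by rewrite !exprS absM // ih. Qed.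
Lemma absV {K : fieldType} {a : K -> R} : nonarch_abs a -> forall x, x != 0 -> a x^-1 = (a x)^-1.
Proof. move=> ha x hx. have := absM ha x x^-1. rewrite mulfV // abs1 // => e.
have n0 : a x != 0. by apply/eqP => h0; move: e; rewrite h0 mul0r; lra.
by apply: (mulfI n0); rewrite -e mulfV. Qed.
Lemma abs_nat {K : fieldType} {a : K -> R} : nonarch_abs a -> forall n, a n%:R <= 1.
Proof. move=> ha. elim=> [|n ih]; first by rewrite abs0.
rewrite -natr1. have [_ _ _ hD] := ha. apply: le_trans (hD _ _) _.
by rewrite ge_max ih (abs1 ha) lexx. Qed.
Lemma abs_neq0 {K : fieldType} {a : K -> R} : nonarch_abs a -> forall x, x != 0 -> 0 < a x.
Proof. move=> ha x hx. rewrite lt_def abs_ge0 // andbT. apply/eqP => h.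
case: ha => _ h0 _ _. by move/h0: h; apply/eqP. Qed.

Lemma nrm0 {K : fieldType} {a : K -> R} {X} {nrm} : @nonarch_norm K a X nrm -> nrm 0 = 0.
Proof. by case=> h _ _; apply/h. Qed.
Lemma nrmN {K : fieldType} {a : K -> R} {X} {nrm} : nonarch_abs a -> @nonarch_norm K a X nrm -> forall x, nrm (- x) = nrm x.
Proof. move=> ha [_ hZ _] x. by rewrite -scaleN1r hZ absN1 // mul1r. Qed.
Lemma nrm_ge0 {K : fieldType} {a : K -> R} {X} {nrm} : nonarch_abs a -> @nonarch_norm K a X nrm -> forall x, 0 <= nrm x.
Proof. move=> ha hn x. have := (let: And3 _ _ h := hn in h) x (-x).
by rewrite subrr (nrm0 hn) (nrmN ha hn) maxxx. Qed.
Lemma nrmD_le {K : fieldType} {a : K -> R} {X} {nrm} : @nonarch_norm K a X nrm -> forall x y B, nrm x <= B -> nrm y <= B -> nrm (x + y) <= B.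
Proof. move=> [_ _ hD] x y B h1 h2. apply: le_trans (hD _ _) _. by rewrite ge_max h1. Qed.
Lemma nrmB_le {K : fieldType} {a : K -> R} {X} {nrm} : nonarch_abs a -> @nonarch_norm K a X nrm -> forall x y B, nrm x <= B -> nrm y <= B -> nrm (x - y) <= B.
Proof. move=> ha hn x y B h1 h2. apply: (nrmD_le hn) h1 _. by rewrite (nrmN ha hn). Qed.
Lemma nrmMn_le {K : fieldType} {a : K -> R} {X} {nrm} : nonarch_abs a -> @nonarch_norm K a X nrm -> forall x m, nrm (x *+ m) <= nrm x.
Proof. move=> ha hn x m. rewrite -scaler_nat. have [_ hZ _] := hn. rewrite hZ.
rewrite -[X in _ <= X]mul1r ler_wpM2r ?(abs_nat ha) //. exact: (nrm_ge0 ha). Qed.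
Lemma nrmB_sym {K : fieldType} {a : K -> R} {X} {nrm} : nonarch_abs a -> @nonarch_norm K a X nrm -> forall x y, nrm (x - y) = nrm (y - x).
Proof. by move=> ha hn x y; rewrite -(nrmN ha hn) opprB. Qed.
End A.
Lemma ac10 (V : zmodType) (a b c d e a' b' c' d' e' : V) :
  a + b - c - d - e - a' - b' + c' + d' + e' = a - a' + b - b' - c + c' - d + d' - e + e'.
Proof. by rewrite [LHS](ACl (1*6*2*7*3*8*4*9*5*10)). Qed.
Lemma Dop_sub (G : zmodType) (K : fieldType) (X : lmodType K) (k : nat) (f g : G -> X) x y :
  Dop k f x y - Dop k g x y = Dop k (fun z => f z - g z) x y.
Proof.
rewrite /Dop !mulrnBl !mulrnDl !opprD !opprK !addrA.
by rewrite ac10 !mulNrn !opprK.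
Qed.
Lemma Dop_scale (G : zmodType) (K : fieldType) (X : lmodType K) (k : nat) (f : G -> X) (s : K) m x y :
  Dop k (fun z => s *: f (z *+ m)) x y = s *: Dop k f (x *+ m) (y *+ m).
Proof.
rewrite /Dop !scalerBr !scalerDr -!scalerMnr !scalerDr.
by rewrite !mulrnDl !mulNrn (mulrnAC x k m).
Qed.
Lemma Dop0 (G : zmodType) (K : fieldType) (X : lmodType K) (k : nat) (f : G -> X) y :
  Dop k f y 0 = 2%:R *: (f (y *+ k) - (k%:R ^+ 3) *: f y).
Proof.
have hk3 : (k <= k^3)%N by case: k => // k; rewrite expnS leq_pmulr // expn_gt0.
rewrite /Dop addr0 subr0 addr0 subr0 scalerBr scalerA -natrX -natrM !scaler_nat.
rewrite -!mulr2n -mulrnA -addrA -opprD -mulrnDr -mulnDr subnKC //.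

Qed.
Lemma Dop_bound (G : zmodType) {K : fieldType} {a : K -> R} {X : lmodType K} {nrm : X -> R} (ha : nonarch_abs a) (hn : nonarch_norm a nrm) (k : nat) (g : G -> X) (B : R) x y :
  nrm (g (x *+ k + y)) <= B -> nrm (g (x *+ k - y)) <= B -> nrm (g (x + y)) <= B ->
  nrm (g (x - y)) <= B -> nrm (g x) <= B -> nrm (Dop k g x y) <= B.
Proof.
move=> h1 h2 h3 h4 h5. rewrite /Dop.
have hm : forall v m, nrm v <= B -> nrm (v *+ m) <= B by move=> v m hv; exact: le_trans (nrmMn_le ha hn v m) hv.
apply: (nrmB_le ha hn); last exact: hm.
apply: (nrmB_le ha hn); last by apply: hm; apply: (nrmD_le hn).
by apply: (nrmD_le hn).
Qed.
Lemma bigmax_recr (F : nat -> R) m p :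
  \big[Num.max/0]_(m <= i < (m + p.+1)%N) F i = Num.max (\big[Num.max/0]_(m <= i < (m + p)%N) F i) (F (m + p)%N).
Proof.
elim: p m => [|p ih] m.
  by rewrite addn1 big_ltn // big_geq // addn0 big_geq // maxC.
rewrite big_ltn; last by rewrite addnS ltnS leq_addr.
rewrite -[(m + p.+2)%N]addSnnS (ih m.+1) maxA -big_ltn; last by rewrite ltnS leq_addr.
by rewrite !addSnnS.
Qed.
Lemma maxterm_S (G : zmodType) k (c : R) (phi : G -> G -> R) x i n :
  maxterm k c phi x i n.+1 = Num.max (maxterm k c phi x i n) (phi (x *+ (k ^ (n + i))%N) 0 / c ^+ (3 * (n + i))%N).
Proof. rewrite /maxterm (addnC n.+1 i) (addnC n i). exact: bigmax_recr. Qed.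
Lemma maxterm_ge0 (G : zmodType) k (c : R) (phi : G -> G -> R) x i n : 0 <= maxterm k c phi x i n.
Proof. elim: n => [|n ih]; first by rewrite /maxterm big_geq.
rewrite maxterm_S. by rewrite le_max ih. Qed.
Lemma maxterm_mono (G : zmodType) k (c : R) (phi : G -> G -> R) x i n p : maxterm k c phi x i n <= maxterm k c phi x i (n + p).
Proof. elim: p => [|p ih]; first by rewrite addn0.
rewrite addnS maxterm_S. apply: le_trans ih _. by rewrite le_max lexx. Qed.
Lemma maxterm_shift (G : zmodType) k (c : R) (phi : G -> G -> R) x n m : 0 < c ->
  maxterm k c phi (x *+ (k ^ n)) 0 m / c ^+ (3 * n) = maxterm k c phi x n m.
Proof. move=> hc. elim: m => [|m ih].
  by rewrite /maxterm !big_geq // mul0r.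
rewrite !maxterm_S -ih mulrC maxr_pMr; last by rewrite invr_ge0 exprn_ge0 // ltW.
rewrite [in RHS]mulrC; congr Num.max.
by rewrite addn0 -mulrnA -expnD (addnC n m) mulrCA -invfM -exprD -mulnDr (addnC n m).
Qed.
Theorem theorem2p1 (K : fieldType) (absK : K -> R)
  (habs : nonarch_abs absK) (hnt : nontrivial_abs absK)
  (X : lmodType K) (nrm : X -> R)
  (hnrm : nonarch_norm absK nrm) (hcomp : complete_norm nrm)
  (G : zmodType) (k : nat)
  (hk : absK ((2 * k ^ 3)%N%:R) != 0)
  (phi : G -> G -> R) (hphi0 : forall x y, 0 <= phi x y)
  (hphi : forall x y : G,
     (fun n : nat => phi (x *+ (k ^ n)) (y *+ (k ^ n)) / absK (k%:R) ^+ (3 * n))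
       @ \oo --> (0 : R))
  (phit : G -> R)
  (hphit : forall x : G,
     (fun n : nat => maxterm k (absK (k%:R)) phi x 0 n) @ \oo --> phit x)
  (f : G -> X)
  (hf : forall x y, nrm (Dop k f x y) <= phi x y) :
  exists C : G -> X,
    [/\ cubic k C,
        (forall x, nrm (C x - f x) <= phit x / absK ((2 * k ^ 3)%N%:R)) &
        ((forall x : G, exists L : nat -> R,
            (forall i, (fun n : nat => maxterm k (absK (k%:R)) phi x i n)
                         @ \oo --> L i) /\ L @ \oo --> (0 : R)) ->
         forall C' : G -> X, cubic k C' ->
           (forall x, nrm (C' x - f x) <= phit x / absK ((2 * k ^ 3)%N%:R)) ->
           C' = C)].
Proof.
set c := absK k%:R.
set d := absK (2 * k ^ 3)%N%:R.
have hnat : (2 * k ^ 3)%N%:R = 2%:R * (k%:R ^+ 3) :> K by rewrite natrM natrX.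
have hk0 : (k%:R : K) != 0.
  apply/eqP => h0; move: hk; rewrite hnat h0 expr0n mulr0 (abs0 habs). by rewrite eqxx.
have h20 : (2%:R : K) != 0.
  apply/eqP => h0; move: hk; rewrite hnat h0 mul0r (abs0 habs). by rewrite eqxx.
have hc : 0 < c := abs_neq0 habs _ hk0.
have hd : 0 < d by rewrite lt_def hk (abs_ge0 habs).
set q : K := k%:R ^+ 3.
have hq0 : q != 0 by rewrite expf_neq0.
have hdeq : d = absK 2%:R * c ^+ 3 by rewrite /d hnat (absM habs) (absX habs).
have ha2 : 0 < absK 2%:R := abs_neq0 habs _ h20.
have hqn : forall n, absK ((q ^+ n)^-1) = (c ^+ (3 * n))^-1.
  by move=> n; rewrite (absV habs) ?expf_neq0 // (absX habs) (absX habs) exprM.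
have [hn0 hnZ hnD] := hnrm.
have step : forall y, f (y *+ k) - q *: f y = (2%:R)^-1 *: Dop k f y 0.
  by move=> y; rewrite Dop0 scalerA mulVf // scale1r.
have stepn : forall y, nrm (f (y *+ k) - q *: f y) <= phi y 0 / absK 2%:R.
  move=> y; rewrite step hnZ (absV habs) // mulrC ler_wpM2r // ?invr_ge0 ?ltW //.
pose u := fun n z => (q ^+ n)^-1 *: f (z *+ (k ^ n)).
have udiff : forall n z, nrm (u n.+1 z - u n z) <= phi (z *+ (k ^ n)) 0 / c ^+ (3 * n) / d.
  move=> n z. 
  have -> : u n.+1 z - u n z = (q ^+ n.+1)^-1 *: (f ((z *+ (k ^ n)) *+ k) - q *: f (z *+ (k ^ n))).
    rewrite /u scalerBr scalerA expnSr mulrnA; congr (_ - _ *: _).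
    by rewrite exprSr invfM -mulrA mulVf // mulr1.
  rewrite hnZ hqn. apply: le_trans (ler_wpM2l _ (stepn _)) _; first by rewrite invr_ge0 exprn_ge0 // ltW.
  have hc0 : c != 0 by rewrite gt_eqF.
  have h20' : absK 2%:R != 0 by rewrite gt_eqF.
  rewrite hdeq mulnSr exprD le_eqVlt; apply/orP; left; apply/eqP.
  by field; rewrite hc0 h20' expf_neq0.
have ubound : forall n z, nrm (u n z - f z) <= maxterm k c phi z 0 n / d.
  move=> n z; elim: n => [|n ih].
    rewrite /u expr0 invr1 scale1r expn0 mulr1n subrr (nrm0 hnrm).
    by rewrite /maxterm big_geq // mul0r.
  have -> : u n.+1 z - f z = (u n.+1 z - u n z) + (u n z - f z) by rewrite addrA subrK.
  apply: (nrmD_le hnrm).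
    apply: le_trans (udiff _ _) _. rewrite maxterm_S addn0; apply: ler_wpM2r; first by rewrite invr_ge0 ltW.
    by rewrite le_max lexx orbT.
  apply: le_trans ih _. rewrite maxterm_S; apply: ler_wpM2r; first by rewrite invr_ge0 ltW.
  by rewrite le_max lexx.
have tcvg : forall z e, 0 < e -> exists N, forall n, (N <= n)%N -> phi (z *+ (k ^ n)) 0 / c ^+ (3 * n) < e.
  move=> z e he. have [N HN] := cvg_eps (hphi z 0) _ he. exists N => n /HN.
  rewrite mul0rn subr0. apply: le_lt_trans. exact: ler_norm.
have cauchy : forall z e, 0 < e -> exists N, forall m n, (N <= m)%N -> (N <= n)%N -> nrm (u m z - u n z) < e.
  move=> z e he. have [N HN] := tcvg z (e * d) (mulr_gt0 he hd).
  have H : forall n p, (N <= n)%N -> nrm (u (n + p)%N z - u n z) < e.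
    move=> n p hn; elim: p => [|p ih]; first by rewrite addn0 subrr (nrm0 hnrm).
    have -> : u (n + p.+1)%N z - u n z = (u (n + p).+1 z - u (n + p)%N z) + (u (n + p)%N z - u n z).
      by rewrite addnS addrA subrK.
    apply: le_lt_trans (hnD _ _) _. rewrite gt_max ih andbT.
    apply: le_lt_trans (udiff _ _) _. rewrite ltr_pdivrMr //. apply: HN. by rewrite (leq_trans hn) ?leq_addr.
  exists N => m n hm hn. case: (leqP n m) => hnm.
    by rewrite -(subnKC hnm); apply: H.
  rewrite (nrmB_sym habs hnrm) -(subnKC (ltnW hnm)); apply: H => //.
have [C hC] := choice (fun z => hcomp (fun n => u n z) (cauchy z)).
have hnge := nrm_ge0 habs hnrm.
have phit_ge : forall z n, maxterm k c phi z 0 n <= phit z.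
  move=> z n; apply: le_eps => e he. have [N HN] := cvg_eps (hphit z) _ he. rewrite -/c in HN.
  have := HN (n + N)%N (leq_addl _ _). have := maxterm_mono _ k c phi z 0 n N.
  have := ler_norm (maxterm k c phi z 0 (n + N) - phit z). lra.
have phit0 : forall z, 0 <= phit z.
  by move=> z; apply: le_trans (phit_ge z 0); apply: maxterm_ge0.
have near : forall z e, 0 < e -> exists N, forall n, (N <= n)%N -> nrm (C z - u n z) <= e.
  move=> z e he. have [N HN] := hC z e he. exists N => n hn.
  by rewrite (nrmB_sym habs hnrm); apply: ltW; apply: HN.
have Cbound : forall z, nrm (C z - f z) <= phit z / d.
  move=> z; apply: le_eps => e he. have [N HN] := near z e he.
  have -> : C z - f z = (C z - u N z) + (u N z - f z) by rewrite addrA subrK.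
  have hp : 0 <= phit z / d by rewrite divr_ge0 // ltW.
  apply: (nrmD_le hnrm).
    apply: le_trans (HN N (leqnn N)) _. lra.
  apply: le_trans (ubound N z) _. 
  have : maxterm k c phi z 0 N / d <= phit z / d by apply: ler_wpM2r; [rewrite invr_ge0 ltW | apply: phit_ge].
  lra.
have Ccubic : cubic k C.
  move=> x y. apply: (iffLR (hn0 _)). apply/eqP; rewrite eq_le hnge andbT. apply: le_eps => e he; rewrite add0r.
  have [N1 H1] := near (x *+ k + y) e he.
  have [N2 H2] := near (x *+ k - y) e he.
  have [N3 H3] := near (x + y) e he.
  have [N4 H4] := near (x - y) e he.
  have [N5 H5] := near x e he.
  have [N6 H6] := cvg_eps (hphi x y) _ he. rewrite -/c in H6.
  pose n := (N1 + N2 + N3 + N4 + N5 + N6)%N.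
  have -> : Dop k C x y = Dop k (fun z => C z - u n z) x y + Dop k (u n) x y by rewrite -Dop_sub subrK.
  apply: (nrmD_le hnrm).
    apply: (Dop_bound _ habs hnrm); [apply: H1|apply: H2|apply: H3|apply: H4|apply: H5]; rewrite /n; lia.
  have -> : Dop k (u n) x y = (q ^+ n)^-1 *: Dop k f (x *+ (k ^ n)) (y *+ (k ^ n)) by rewrite -Dop_scale.
  rewrite hnZ hqn. apply: le_trans (ler_wpM2l _ (hf _ _)) _; first by rewrite invr_ge0 exprn_ge0 // ltW.
  have h6 : (N6 <= n)%N by rewrite /n; lia.
  have := H6 n h6. rewrite subr0 mulrC => h. exact: le_trans (ler_norm _) (ltW h).
exists C; split => //.
move=> hL C' hC' hC'b.
have hom : forall g : G -> X, cubic k g -> forall z n, g (z *+ (k ^ n)) = q ^+ n *: g z.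
  move=> g hg z n; elim: n => [|n ih]; first by rewrite expn0 mulr1n expr0 scale1r.
  have h1 : g ((z *+ (k ^ n)) *+ k) = q *: g (z *+ (k ^ n)).
    have := hg (z *+ (k ^ n)) 0. rewrite Dop0 => /eqP. rewrite scaler_eq0 (negbTE h20) /= subr_eq0 => /eqP. done.
  by rewrite expnSr mulrnA h1 ih scalerA -exprS.
apply: funext => x.
apply/eqP; rewrite -subr_eq0; apply/eqP; apply: (iffLR (hn0 _)).
apply/eqP; rewrite eq_le hnge andbT. apply: le_eps => e he; rewrite add0r.
have [L [hLi hL0]] := hL x.
have [N HN] := cvg_eps hL0 _ (mulr_gt0 he hd).
pose X0 := x *+ (k ^ N).
have hC3 : 0 < c ^+ (3 * N) by rewrite exprn_gt0.
have key : phit X0 / c ^+ (3 * N) <= L N.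
  apply: le_eps => e' he'.
  have h2pos : (0:R) < 2 by lra.
  have he2 : 0 < e' / 2 * c ^+ (3 * N) by rewrite mulr_gt0 // divr_gt0.
  have [N1 H1] := cvg_eps (hphit X0) _ he2. rewrite -/c in H1.
  have [N2 H2] := cvg_eps (hLi N) _ (divr_gt0 he' h2pos).
  pose m := (N1 + N2)%N.
  have := H1 m (leq_addr _ _). have := H2 m (leq_addl _ _).
  have hs := maxterm_shift _ k c phi x N m hc.
  have hmX : maxterm k c phi X0 0 m = maxterm k c phi x N m * c ^+ (3 * N).
    by rewrite -hs divfK // gt_eqF.
  rewrite hmX ler_pdivrMr //.
  have := ler_norm (maxterm k c phi x N m - L N).
  have := ler_norm (phit X0 - maxterm k c phi x N m * c ^+ (3 * N)).
  rewrite distrC.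
  nra.
have -> : C' x - C x = (q ^+ N)^-1 *: (C' X0 - C X0).
  by rewrite /X0 !hom // -scalerBr scalerA mulVf ?expf_neq0 // scale1r.
rewrite hnZ hqn.
have hb : nrm (C' X0 - C X0) <= phit X0 / d.
  have -> : C' X0 - C X0 = (C' X0 - f X0) - (C X0 - f X0) by rewrite opprB addrA subrK.
  exact: (nrmB_le habs hnrm).
apply: le_trans (ler_wpM2l _ hb) _; first by rewrite invr_ge0 ltW.
rewrite mulrA (mulrC _ (phit X0)) ler_pdivrMr //.
have := HN N (leqnn N). rewrite subr0.
have := ler_norm (L N). lra.
Qed.
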